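(* Let $n\ge p\ge1$, $\lambda>0$, $0<\varepsilon<\frac34$, and let $f:\mathbb{R}^{n\times p}\to\mathbb{R}$ be twice continuously differentiable. Let $\mathrm{St}(p,n)^\varepsilon=\{X:\|X^\top X-I_p\|\le\varepsilon\}$, let $L>0$ be such that $\nabla f$ is $L$-Lipschitz on $\mathrm{St}(p,n)^\varepsilon$, $L'=\max_{X\in\mathrm{St}(p,n)^\varepsilon}\|\nabla f(X)\|$, $\hat L=\max(L,L')$, and $s=\sup_{X\in\mathrm{St}(p,n)^\varepsilon}\|\mathrm{sym}(X^\top\nabla f(X))\|$. Let $$\mu\ge\frac{2}{3-4\varepsilon}\left(L(1-\varepsilon)+3s+\hat L^2\frac{(1+\varepsilon)^2}{\lambda(1-\varepsilon)}\right),\qquad \nu=\lambda\mu,$$ and $\mathcal{L}(X)=f(X)-\frac12\langle\mathrm{sym}(X^\top\nabla f(X)),X^\top X-I_p\rangle+\mu\mathcal{N}(X)$. Then for all $X\in\mathrm{St}(p,n)^\varepsilon$, $$\langle\nabla\mathcal{L}(X),\Lambda(X)\rangle\ge\frac12\|\mathrm{grad}f(X)\|^2+\nu\mathcal{N}(X).$$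
   Context: $\|\cdot\|$ and $\langle\cdot,\cdot\rangle$ are the Frobenius norm and inner product. $\mathrm{sym}(M)=\frac12(M+M^\top)$, $\mathrm{skew}(M)=\frac12(M-M^\top)$. $\mathcal{N}(X)=\frac14\|X^\top X-I_p\|^2$. For all $X\in\mathbb{R}^{n\times p}$, $\mathrm{grad}f(X)=\mathrm{skew}(\nabla f(X)X^\top)X$, and the landing field is $\Lambda(X)=\mathrm{grad}f(X)+\lambda X(X^\top X-I_p)$. *)

(* Defs.v *)
From HB Require Import structures.
From mathcomp Require Import all_boot all_order all_algebra.
From mathcomp Require Import all_classical all_reals all_analysis.
Set Implicit Arguments. Unset Strict Implicit. Unset Printing Implicit Defensive.
Import Order.TTheory GRing.Theory Num.Theory.
Import numFieldNormedType.Exports.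
Local Open Scope classical_set_scope.
Local Open Scope ring_scope.

Definition frob_inner (R : realType) (m k : nat) (A B : 'M[R]_(m, k)) : R :=
  \sum_(i < m) \sum_(j < k) A i j * B i j.
Definition frob_norm (R : realType) (m k : nat) (A : 'M[R]_(m, k)) : R :=
  Num.sqrt (frob_inner A A).

Definition msym (R : realType) (k : nat) (M : 'M[R]_k) : 'M[R]_k :=
  2^-1 *: (M + M^T).
Definition mskew (R : realType) (k : nat) (M : 'M[R]_k) : 'M[R]_k :=
  2^-1 *: (M - M^T).

Definition egrad (R : realType) (n p : nat) (F : 'M[R]_(n, p) -> R)
  (X : 'M[R]_(n, p)) : 'M[R]_(n, p) :=
  \matrix_(i, j) ('D_(delta_mx i j) F X).

Definition C2 (R : realType) (n p : nat) (F : 'M[R]_(n, p) -> R) : Prop :=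
  (forall X, differentiable F X) /\
  (forall i j X, differentiable (fun Y => egrad F Y i j) X) /\
  (forall i j k l, continuous (fun X => egrad (fun Y => egrad F Y i j) X k l)).

Definition Ncons (R : realType) (n p : nat) (X : 'M[R]_(n, p)) : R :=
  4^-1 * frob_norm (X^T *m X - 1%:M) ^+ 2.

Definition St_eps (R : realType) (n p : nat) (eps : R) : set 'M[R]_(n, p) :=
  [set X | frob_norm (X^T *m X - 1%:M) <= eps].

Definition rgrad (R : realType) (n p : nat) (F : 'M[R]_(n, p) -> R)
  (X : 'M[R]_(n, p)) : 'M[R]_(n, p) :=
  mskew (egrad F X *m X^T) *m X.

Definition landing (R : realType) (n p : nat) (lam : R) (F : 'M[R]_(n, p) -> R)
  (X : 'M[R]_(n, p)) : 'M[R]_(n, p) :=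
  rgrad F X + lam *: (X *m (X^T *m X - 1%:M)).

Definition merit (R : realType) (n p : nat) (mu : R) (F : 'M[R]_(n, p) -> R)
  (X : 'M[R]_(n, p)) : R :=
  F X - 2^-1 * frob_inner (msym (X^T *m egrad F X)) (X^T *m X - 1%:M)
  + mu * Ncons X.

(* Main.v *)
Require Import Defs.
From HB Require Import structures.
From mathcomp Require Import all_boot all_order all_algebra.
From mathcomp Require Import all_classical all_reals all_analysis.
From mathcomp Require Import ring lra.
Set Implicit Arguments. Unset Strict Implicit. Unset Printing Implicit Defensive.
Import Order.TTheory GRing.Theory Num.Theory.
Import numFieldNormedType.Exports.
Local Open Scope classical_set_scope.
Local Open Scope ring_scope.

Section LA.
Variable R : realType.
Local Notation fi := (@frob_inner R _ _).
Local Notation fn := (@frob_norm R _ _).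

Lemma fiE m k (A B : 'M[R]_(m,k)) : fi A B = \tr (A^T *m B).
Proof.
rewrite /frob_inner /mxtrace exchange_big; apply: eq_bigr => j _.
by rewrite mxE; apply: eq_bigr => i _; rewrite mxE.
Qed.

Lemma fiC m k (A B : 'M[R]_(m,k)) : fi A B = fi B A.
Proof. by rewrite /frob_inner; apply: eq_bigr => i _; apply: eq_bigr => j _; rewrite mulrC. Qed.

Lemma fiDl m k (A B C : 'M[R]_(m,k)) : fi (A + B) C = fi A C + fi B C.
Proof. by rewrite !fiE linearD /= mulmxDl mxtraceD. Qed.
Lemma fiDr m k (A B C : 'M[R]_(m,k)) : fi C (A + B) = fi C A + fi C B.
Proof. by rewrite fiC fiDl !(fiC C). Qed.
Lemma fiZl m k a (A C : 'M[R]_(m,k)) : fi (a *: A) C = a * fi A C.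
Proof. by rewrite !fiE linearZ /= -scalemxAl mxtraceZ. Qed.
Lemma fiZr m k a (A C : 'M[R]_(m,k)) : fi C (a *: A) = a * fi C A.
Proof. by rewrite fiC fiZl fiC. Qed.
Lemma fiNl m k (A C : 'M[R]_(m,k)) : fi (- A) C = - fi A C.
Proof. by rewrite -scaleN1r fiZl mulN1r. Qed.
Lemma fiNr m k (A C : 'M[R]_(m,k)) : fi C (- A) = - fi C A.
Proof. by rewrite fiC fiNl fiC. Qed.
Lemma fiBl m k (A B C : 'M[R]_(m,k)) : fi (A - B) C = fi A C - fi B C.
Proof. by rewrite fiDl fiNl. Qed.
Lemma fiBr m k (A B C : 'M[R]_(m,k)) : fi C (A - B) = fi C A - fi C B.
Proof. by rewrite fiDr fiNr. Qed.
Lemma fi0l m k (C : 'M[R]_(m,k)) : fi 0 C = 0.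
Proof. by rewrite -(scale0r (0 : 'M[R]_(m,k))) fiZl mul0r. Qed.
Lemma fi0r m k (C : 'M[R]_(m,k)) : fi C 0 = 0.
Proof. by rewrite fiC fi0l. Qed.

Lemma fi_tr m k (A B : 'M[R]_(m,k)) : fi A^T B^T = fi A B.
Proof. by rewrite /frob_inner exchange_big; apply: eq_bigr => i _; apply: eq_bigr => j _; rewrite !mxE. Qed.

Lemma fi_mull m k l (A : 'M[R]_(m,k)) (B : 'M[R]_(k,l)) C :
  fi (A *m B) C = fi B (A^T *m C).
Proof. by rewrite !fiE trmx_mul mulmxA. Qed.
Lemma fi_mulr m k l (A : 'M[R]_(m,k)) (B : 'M[R]_(k,l)) C :
  fi (A *m B) C = fi A (C *m B^T).
Proof. by rewrite !fiE trmx_mul -mulmxA mxtrace_mulC mulmxA. Qed.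

Lemma fi_ge0 m k (A : 'M[R]_(m,k)) : 0 <= fi A A.
Proof. by apply: sumr_ge0 => i _; apply: sumr_ge0 => j _; exact: sqr_ge0. Qed.

Lemma fn_ge0 m k (A : 'M[R]_(m,k)) : 0 <= fn A.
Proof. exact: sqrtr_ge0. Qed.

Lemma fn_sqr m k (A : 'M[R]_(m,k)) : fn A ^+ 2 = fi A A.
Proof. by rewrite /frob_norm sqr_sqrtr // fi_ge0. Qed.

Lemma fi_eq0 m k (A : 'M[R]_(m,k)) : fi A A = 0 -> A = 0.
Proof.
move=> /eqP; rewrite psumr_eq0; last by move=> i _; apply: sumr_ge0 => j _; exact: sqr_ge0.
move=> /allP H; apply/matrixP => i j; rewrite mxE.
have := H i (mem_index_enum _); rewrite /= psumr_eq0; last by move=> *; exact: sqr_ge0.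
move=> /allP /(_ j (mem_index_enum _)) /=; by rewrite mulf_eq0 orbb => /eqP.
Qed.

Lemma fi_CS m k (A B : 'M[R]_(m,k)) : fi A B <= fn A * fn B.
Proof.
have key : forall s, 0 < s -> 2 * s * fi A B <= s ^+ 2 * fi A A + fi B B.
  move=> s s0; have := fi_ge0 (s *: A - B).
  rewrite !(fiBl, fiBr, fiZl, fiZr) (fiC B A). 
  by move=> h; nra.
have hA := fn_sqr A; have hB := fn_sqr B.
have a0 := fn_ge0 A; have b0 := fn_ge0 B.
have [->|Anz] := eqVneq A 0.
  by rewrite fi0l /frob_norm fi0l sqrtr0 mul0r.
have fa : 0 < fn A.
  rewrite lt_neqAle a0 andbT eq_sym; apply/negP => /eqP h0.
  by move: Anz; rewrite (fi_eq0 (_ : fi A A = 0)) ?eqxx // -hA h0 expr0n.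
have [->|Bnz] := eqVneq B 0.
  by rewrite fi0r /frob_norm fi0l sqrtr0 mulr0.
have fb : 0 < fn B.
  rewrite lt_neqAle b0 andbT eq_sym; apply/negP => /eqP h0.
  by move: Bnz; rewrite (fi_eq0 (_ : fi B B = 0)) ?eqxx // -hB h0 expr0n.
have := key (fn B / fn A) (divr_gt0 fb fa).
have sa : fn B / fn A * fn A = fn B by rewrite divfK // gt_eqF.
set s := fn B / fn A in sa *.
rewrite -hA -hB => h.
have h1 : s * fi A B <= s * (fn A * fn B).
  have e1 : s * (fn A * fn B) = fn B ^+ 2 by rewrite mulrA sa.
  have e2 : s ^+ 2 * fn A ^+ 2 = fn B ^+ 2 by rewrite -sa; ring.
  rewrite e1; rewrite e2 in h; lra.
by rewrite ler_pM2l in h1 => //; exact: divr_gt0.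
Qed.

Lemma fi_CSabs m k (A B : 'M[R]_(m,k)) : `|fi A B| <= fn A * fn B.
Proof.
rewrite ler_norml fi_CS andbT.
have := fi_CS A (- B); rewrite fiNr /frob_norm fiNl fiNr opprK.
by rewrite lerNl.
Qed.

Lemma fn_tr m k (A : 'M[R]_(m,k)) : fn A^T = fn A.
Proof. by rewrite /frob_norm fi_tr. Qed.

Lemma fn_scale m k a (A : 'M[R]_(m,k)) : fn (a *: A) = `|a| * fn A.
Proof. by rewrite /frob_norm fiZl fiZr mulrA -expr2 sqrtrM ?sqr_ge0 // sqrtr_sqr. Qed.

Lemma fn_opp m k (A : 'M[R]_(m,k)) : fn (- A) = fn A.
Proof. by rewrite /frob_norm fiNl fiNr opprK. Qed.

Lemma fn_le_sqr m k (A : 'M[R]_(m,k)) c : 0 <= c -> fi A A <= c ^+ 2 -> fn A <= c.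
Proof. by move=> c0 h; rewrite -(ger0_norm c0) -sqrtr_sqr ler_sqrt // sqr_ge0. Qed.

Lemma fn_triangle m k (A B : 'M[R]_(m,k)) : fn (A + B) <= fn A + fn B.
Proof.
apply: fn_le_sqr; first by rewrite addr_ge0 // fn_ge0.
rewrite fiDl !fiDr (fiC B A) -!fn_sqr.
have := fi_CS A B; nra.
Qed.

Lemma fn_sub_le m k (A B : 'M[R]_(m,k)) : fn (A - B) <= fn A + fn B.
Proof. by rewrite -(fn_opp B) fn_triangle. Qed.

Lemma fi_row_sum m k (A : 'M[R]_(m,k)) : fi A A = \sum_i fi (row i A) (row i A).
Proof.
rewrite /frob_inner; apply: eq_bigr => i _; rewrite big_ord1.
by apply: eq_bigr => j _; rewrite !mxE.
Qed.

Lemma fn_mul m k l (A : 'M[R]_(m,k)) (B : 'M[R]_(k,l)) : fn (A *m B) <= fn A * fn B.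
Proof.
apply: fn_le_sqr; first by rewrite mulr_ge0 // fn_ge0.
rewrite exprMn !fn_sqr.
have -> : fi B B = \sum_j fi (row j B^T) (row j B^T) by rewrite -fi_row_sum fi_tr.
rewrite [fi A A]fi_row_sum mulr_suml.
rewrite [X in X <= _]/frob_inner.
apply: ler_sum => i _; rewrite mulr_sumr; apply: ler_sum => j _.
have e : (A *m B) i j = fi (row i A) (row j B^T).
  rewrite mxE /frob_inner big_ord1; apply: eq_bigr => t _; by rewrite !mxE.
rewrite e -(fn_sqr (row i A)) -(fn_sqr (row j B^T)) -exprMn -expr2.
have := fi_CSabs (row i A) (row j B^T) => h.
rewrite -real_normK ?num_real //.
have h0 := normr_ge0 (fi (row i A) (row j B^T)).
by rewrite lerXn2r // ?nnegrE // mulr_ge0 // fn_ge0.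
Qed.


Section Stiefel.
Variables (n p : nat) (X : 'M[R]_(n,p)) (eps : R).
Hypothesis eps1 : eps < 1.
Hypothesis hX : fn (X^T *m X - 1%:M) <= eps.
Local Notation D := (X^T *m X - 1%:M).

Lemma XtX : X^T *m X = 1%:M + D.
Proof. by rewrite addrC subrK. Qed.

Lemma D_sym : D^T = D.
Proof. by rewrite linearB /= trmx_mul trmxK trmx1. Qed.

Lemma fi_XA k (A : 'M[R]_(p,k)) : fi (X *m A) (X *m A) = fi A A + fi A (D *m A).
Proof. by rewrite fi_mull mulmxA {1}XtX mulmxDl mul1mx fiDr. Qed.

Lemma fi_DA_bound k (A : 'M[R]_(p,k)) : `|fi A (D *m A)| <= eps * fi A A.
Proof.
apply: le_trans (fi_CSabs _ _) _.
apply: le_trans (_ : fn A * (fn D * fn A) <= _).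
  by rewrite ler_wpM2l ?fn_ge0 // fn_mul.
by rewrite -fn_sqr mulrCA -expr2 ler_wpM2r // ?exprn_ge0 // ?fn_ge0.
Qed.

Lemma XA_le k (A : 'M[R]_(p,k)) : fi (X *m A) (X *m A) <= (1 + eps) * fi A A.
Proof. rewrite fi_XA; have := fi_DA_bound A; rewrite ler_norml => /andP[_ h]; lra. Qed.

Lemma XA_ge k (A : 'M[R]_(p,k)) : (1 - eps) * fi A A <= fi (X *m A) (X *m A).
Proof. rewrite fi_XA; have := fi_DA_bound A; rewrite ler_norml => /andP[h _]; lra. Qed.

Lemma BXt_le k (B : 'M[R]_(k,p)) : fi (B *m X^T) (B *m X^T) <= (1 + eps) * fi B B.
Proof. rewrite -fi_tr trmx_mul trmxK -(fi_tr B); exact: XA_le. Qed.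

Lemma BX_le k (B : 'M[R]_(k,n)) : fi (B *m X) (B *m X) <= (1 + eps) * fi B B.
Proof.
have e0 : eps >= 0 by apply: le_trans hX; exact: fn_ge0.
set y2 := fi (B *m X) (B *m X).
have h1 : y2 <= fn B * fn (B *m X *m X^T).
  by rewrite /y2 fi_mulr; exact: fi_CS.
have h2 : fn (B *m X *m X^T) ^+ 2 <= (1 + eps) * y2 by rewrite fn_sqr BXt_le.
have y0 : 0 <= y2 by exact: fi_ge0.
have hb := fn_sqr B; have b0 := fn_ge0 B; have z0 := fn_ge0 (B *m X *m X^T).
set z := fn (B *m X *m X^T) in h1 h2 z0.
have h3 : y2 ^+ 2 <= fn B ^+ 2 * z ^+ 2.
  rewrite -exprMn lerXn2r ?nnegrE //; by rewrite mulr_ge0.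
have [->|ynz] := eqVneq y2 0; first by rewrite -hb; nra.
have yp : 0 < y2 by rewrite lt_neqAle eq_sym ynz.
rewrite -hb.
have : y2 * y2 <= y2 * ((1 + eps) * fn B ^+ 2) by nra.
by rewrite ler_pM2l // mulrC.
Qed.

End Stiefel.

Lemma fi_msym k (A B : 'M[R]_k) : B^T = B -> fi (msym A) B = fi A B.
Proof.
move=> hB; rewrite /msym fiZl fiDl -{2}hB fi_tr; lra.
Qed.

Lemma mskew_tr k (A : 'M[R]_k) : (mskew A)^T = - mskew A.
Proof. by rewrite /mskew linearZ /= linearB /= trmxK -scalerN opprB. Qed.

Lemma msym_tr k (A : 'M[R]_k) : (msym A)^T = msym A.
Proof. by rewrite /msym linearZ /= linearD /= trmxK addrC. Qed.

Lemma fi_mskew k (A : 'M[R]_k) : fi (mskew A) (mskew A) = fi (mskew A) A.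
Proof.
rewrite {2}/mskew fiZr fiBr.
have -> : fi (mskew A) A^T = - fi (mskew A) A by rewrite -fi_tr trmxK mskew_tr fiNl.
lra.
Qed.

Lemma LtX_gen n p (X : 'M[R]_(n,p)) (Dm : 'M[R]_p) (P : 'M[R]_n) lam :
  X^T *m X = 1%:M + Dm -> Dm^T = Dm -> P^T = - P ->
  (P *m X + lam *: (X *m Dm))^T *m X + X^T *m (P *m X + lam *: (X *m Dm))
  = (2 * lam) *: (Dm + Dm *m Dm).
Proof.
move=> hX hD hP.
have e1 : (P *m X + lam *: (X *m Dm))^T *m X = - (X^T *m P *m X) + lam *: (Dm + Dm *m Dm).
  rewrite linearD /= linearZ /= !trmx_mul hP hD mulmxDl -scalemxAl -(mulmxA Dm) hX.
  by rewrite mulmxDr mulmx1 mulmxN mulNmx.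
have e2 : X^T *m (P *m X + lam *: (X *m Dm)) = X^T *m P *m X + lam *: (Dm + Dm *m Dm).
  by rewrite mulmxDr -scalemxAr mulmxA mulmxA hX mulmxDl mul1mx.
rewrite e1 e2 addrACA addNr add0r -scalerDl.
by congr (_ *: _); lra.
Qed.

Lemma fi_skew_mul n p (G : 'M[R]_(n,p)) X : fi G (mskew (G *m X^T) *m X) = fi (mskew (G *m X^T)) (mskew (G *m X^T)).
Proof. by rewrite fiC fi_mulr fi_mskew. Qed.

End LA.

Section Der.
Variables (R : realType) (n p : nat).
Local Notation M := 'M[R]_(n,p).

Lemma isdM (f g : M -> R) x v df dg : is_derive x v f df -> is_derive x v g dg ->
  is_derive x v (fun y => f y * g y) (f x * dg + g x * df).
Proof. move=> h1 h2; exact: (is_deriveM h1 h2). Qed.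

Lemma isdZ (f : M -> R) (k : R) x v df : is_derive x v f df ->
  is_derive x v (fun y => k * f y) (k * df).
Proof. move=> h; exact: (is_deriveZ k h). Qed.

Lemma isdD (f g : M -> R) x v df dg : is_derive x v f df -> is_derive x v g dg ->
  is_derive x v (fun y => f y + g y) (df + dg).
Proof. move=> h1 h2; exact: (is_deriveD h1 h2). Qed.

Lemma isdN (f : M -> R) x v df : is_derive x v f df ->
  is_derive x v (fun y => - f y) (- df).
Proof. move=> h; exact: (is_deriveN h). Qed.

Lemma isdB (f g : M -> R) x v df dg : is_derive x v f df -> is_derive x v g dg ->
  is_derive x v (fun y => f y - g y) (df - dg).
Proof. move=> h1 h2; exact: (is_deriveB h1 h2). Qed.

Lemma isdC (c : R) x v : is_derive x v (fun _ : M => c) 0.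
Proof. exact: is_derive_cst. Qed.

Lemma isdS m (h : 'I_m -> M -> R) x v dh : (forall i, is_derive x v (h i) (dh i)) ->
  is_derive x v (fun y => \sum_i h i y) (\sum_i dh i).
Proof. move=> H; rewrite -fct_sumE; exact: is_derive_sum. Qed.

Lemma difM (f g : M -> R) x : differentiable f x -> differentiable g x ->
  differentiable (fun y => f y * g y) x.
Proof. move=> h1 h2; exact: (differentiableM h1 h2). Qed.
Lemma difD (f g : M -> R) x : differentiable f x -> differentiable g x ->
  differentiable (fun y => f y + g y) x.
Proof. move=> h1 h2; exact: (differentiableD h1 h2). Qed.
Lemma difN (f : M -> R) x : differentiable f x -> differentiable (fun y => - f y) x.
Proof. move=> h1; exact: (differentiableN h1). Qed.
Lemma difB (f g : M -> R) x : differentiable f x -> differentiable g x ->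
  differentiable (fun y => f y - g y) x.
Proof. move=> h1 h2; exact: (differentiableB h1 h2). Qed.
Lemma difC (c : R) x : differentiable (fun _ : M => c) x.
Proof. exact: differentiable_cst. Qed.
Lemma difS m (h : 'I_m -> M -> R) x : (forall i, differentiable (h i) x) ->
  differentiable (fun y => \sum_i h i y) x.
Proof. move=> H; rewrite -fct_sumE; exact: differentiable_sum. Qed.

Definition mxder (x v : M) a b (A : M -> 'M[R]_(a,b)) (dA : 'M[R]_(a,b)) :=
  forall i j, is_derive x v (fun y => A y i j) (dA i j).
Definition mxdif (x : M) a b (A : M -> 'M[R]_(a,b)) :=
  forall i j, differentiable (fun y => A y i j) x.

Lemma mxder_id x v : mxder x v id v.
Proof.
move=> i j.
have h1 := @is_derive_id _ _ x v.
have dv : derivable (id : M -> M) x v by exact: ex_derive.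
have := (derivable_mxP id x v).1 dv i j => hd.
apply: DeriveDef => //.
have := derive_mx dv; rewrite derive_val => /matrixP /(_ i j); rewrite mxE => <-.
by [].
Qed.

Lemma mxdif_id x : mxdif x id.
Proof. move=> i j; exact: differentiable_coord. Qed.

Lemma mxder_cst x v a b (C : 'M[R]_(a,b)) : mxder x v (fun _ => C) 0.
Proof. move=> i j; rewrite mxE; exact: isdC. Qed.
Lemma mxdif_cst x a b (C : 'M[R]_(a,b)) : mxdif x (fun _ => C).
Proof. move=> i j; exact: difC. Qed.

Lemma mxder_add x v a b (A B : M -> 'M[R]_(a,b)) dA dB : mxder x v A dA -> mxder x v B dB ->
  mxder x v (fun y => A y + B y) (dA + dB).
Proof.
move=> hA hB i j; rewrite mxE.
have -> : (fun y => (A y + B y) i j) = (fun y => A y i j + B y i j) by apply: funext => y; rewrite mxE.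
exact: isdD.
Qed.
Lemma mxdif_add x a b (A B : M -> 'M[R]_(a,b)) : mxdif x A -> mxdif x B ->
  mxdif x (fun y => A y + B y).
Proof.
move=> hA hB i j.
have -> : (fun y => (A y + B y) i j) = (fun y => A y i j + B y i j) by apply: funext => y; rewrite mxE.
exact: difD.
Qed.

Lemma mxder_opp x v a b (A : M -> 'M[R]_(a,b)) dA : mxder x v A dA ->
  mxder x v (fun y => - A y) (- dA).
Proof.
move=> hA i j; rewrite mxE.
have -> : (fun y => (- A y) i j) = (fun y => - A y i j) by apply: funext => y; rewrite mxE.
exact: isdN.
Qed.
Lemma mxdif_opp x a b (A : M -> 'M[R]_(a,b)) : mxdif x A -> mxdif x (fun y => - A y).
Proof.
move=> hA i j.
have -> : (fun y => (- A y) i j) = (fun y => - A y i j) by apply: funext => y; rewrite mxE.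
exact: difN.
Qed.

Lemma mxder_sub x v a b (A B : M -> 'M[R]_(a,b)) dA dB : mxder x v A dA -> mxder x v B dB ->
  mxder x v (fun y => A y - B y) (dA - dB).
Proof. by move=> hA hB; apply: mxder_add => //; apply: mxder_opp. Qed.
Lemma mxdif_sub x a b (A B : M -> 'M[R]_(a,b)) : mxdif x A -> mxdif x B ->
  mxdif x (fun y => A y - B y).
Proof. by move=> hA hB; apply: mxdif_add => //; apply: mxdif_opp. Qed.

Lemma mxder_scale x v a b (k : R) (A : M -> 'M[R]_(a,b)) dA : mxder x v A dA ->
  mxder x v (fun y => k *: A y) (k *: dA).
Proof.
move=> hA i j; rewrite mxE.
have -> : (fun y => (k *: A y) i j) = (fun y => k * A y i j) by apply: funext => y; rewrite mxE.
exact: isdZ.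
Qed.
Lemma mxdif_scale x a b (k : R) (A : M -> 'M[R]_(a,b)) : mxdif x A ->
  mxdif x (fun y => k *: A y).
Proof.
move=> hA i j.
have -> : (fun y => (k *: A y) i j) = (fun y => k * A y i j) by apply: funext => y; rewrite mxE.
exact: difM (difC _ _) (hA i j).
Qed.

Lemma mxder_tr x v a b (A : M -> 'M[R]_(a,b)) dA : mxder x v A dA ->
  mxder x v (fun y => (A y)^T) dA^T.
Proof.
move=> hA i j; rewrite mxE.
have -> : (fun y => (A y)^T i j) = (fun y => A y j i) by apply: funext => y; rewrite mxE.
exact: hA.
Qed.
Lemma mxdif_tr x a b (A : M -> 'M[R]_(a,b)) : mxdif x A -> mxdif x (fun y => (A y)^T).
Proof.
move=> hA i j.
have -> : (fun y => (A y)^T i j) = (fun y => A y j i) by apply: funext => y; rewrite mxE.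
exact: hA.
Qed.

Lemma mxder_mul x v a b c (A : M -> 'M[R]_(a,b)) (B : M -> 'M[R]_(b,c)) dA dB :
  mxder x v A dA -> mxder x v B dB ->
  mxder x v (fun y => A y *m B y) (dA *m B x + A x *m dB).
Proof.
move=> hA hB i j.
have -> : (fun y => (A y *m B y) i j) = (fun y => \sum_k (A y i k * B y k j)).
  by apply: funext => y; rewrite mxE.
have -> : (dA *m B x + A x *m dB) i j = \sum_k (A x i k * dB k j + B x k j * dA i k).
  rewrite !mxE -big_split /=; apply: eq_bigr => k _; rewrite mulrC; ring.
apply: isdS => k; exact: isdM.
Qed.
Lemma mxdif_mul x a b c (A : M -> 'M[R]_(a,b)) (B : M -> 'M[R]_(b,c)) :
  mxdif x A -> mxdif x B -> mxdif x (fun y => A y *m B y).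
Proof.
move=> hA hB i j.
have -> : (fun y => (A y *m B y) i j) = (fun y => \sum_k (A y i k * B y k j)).
  by apply: funext => y; rewrite mxE.
apply: difS => k; exact: difM.
Qed.

Lemma isd_fi x v a b (A B : M -> 'M[R]_(a,b)) dA dB :
  mxder x v A dA -> mxder x v B dB ->
  is_derive x v (fun y => frob_inner (A y) (B y)) (frob_inner dA (B x) + frob_inner (A x) dB).
Proof.
move=> hA hB; rewrite /frob_inner -big_split /=.
apply: isdS => i; rewrite -big_split /=; apply: isdS => j.
have := isdM (hA i j) (hB i j); rewrite addrC; by rewrite (mulrC (dA i j)).
Qed.
Lemma dif_fi x a b (A B : M -> 'M[R]_(a,b)) : mxdif x A -> mxdif x B ->
  differentiable (fun y => frob_inner (A y) (B y)) x.
Proof.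
move=> hA hB; rewrite /frob_inner; apply: difS => i; apply: difS => j; exact: difM.
Qed.

End Der.

Lemma egrad_inner (R : realType) n p (F : 'M[R]_(n,p) -> R) x V :
  differentiable F x -> frob_inner (egrad F x) V = 'D_V F x.
Proof.
move=> dF; rewrite deriveE // {2}(matrix_sum_delta V) linear_sum /=.
rewrite /frob_inner; apply: eq_bigr => i _; rewrite linear_sum /=.
apply: eq_bigr => j _; rewrite linearZ /= mxE deriveE // mulrC.
by []. Qed.

Lemma merit_eq (R : realType) n p (mu : R) (f : 'M[R]_(n,p) -> R) :
  merit mu f = fun Y => f Y - 2^-1 * frob_inner (msym (Y^T *m egrad f Y)) (Y^T *m Y - 1%:M)
     + mu * (4^-1 * frob_inner (Y^T *m Y - 1%:M) (Y^T *m Y - 1%:M)).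
Proof. by apply: funext => Y; rewrite /merit /Ncons fn_sqr. Qed.

Section MD.
Variables (R : realType) (n p : nat) (mu : R) (f : 'M[R]_(n,p) -> R) (X V : 'M[R]_(n,p)).
Hypothesis hf : C2 f.

Let DG := \matrix_(i,j) 'D_V (fun Y => egrad f Y i j) X.

Lemma mxder_G : mxder X V (egrad f) DG.
Proof.
move=> i j; rewrite mxE; apply: derivableP; apply: diff_derivable.
exact: hf.2.1.
Qed.

Lemma mxdif_G : mxdif X (egrad f).
Proof. move=> i j; exact: hf.2.1. Qed.

Lemma merit_isd : is_derive X V (merit mu f) (frob_inner (egrad f X) V - 2^-1 * (frob_inner (msym (V^T *m egrad f X + X^T *m DG)) (X^T *m X - 1%:M) + frob_inner (msym (X^T *m egrad f X)) (V^T *m X + X^T *m V - 0)) + mu * (4^-1 * (frob_inner (V^T *m X + X^T *m V - 0) (X^T *m X - 1%:M) + frob_inner (X^T *m X - 1%:M) (V^T *m X + X^T *m V - 0)))).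
Proof.
rewrite merit_eq.
have hT : mxder X V (fun Y : 'M[R]_(n,p) => Y^T) V^T := mxder_tr (@mxder_id R n p X V).
have hI : mxder X V (fun Y : 'M[R]_(n,p) => Y) V := @mxder_id R n p X V.
have hM := mxder_mul hT mxder_G.
have hS : mxder X V (fun Y => msym (Y^T *m egrad f Y)) (msym (V^T *m egrad f X + X^T *m DG)).
  exact: (mxder_scale 2^-1 (mxder_add hM (mxder_tr hM))).
have hD : mxder X V (fun Y : 'M[R]_(n,p) => Y^T *m Y - 1%:M) (V^T *m X + X^T *m V - 0).
  exact: (mxder_sub (mxder_mul hT hI) (mxder_cst _ _ 1%:M)).
have hf1 : is_derive X V f (frob_inner (egrad f X) V).
  rewrite egrad_inner; last exact: hf.1.
  apply: derivableP; apply: diff_derivable; exact: hf.1.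
exact: (isdD (isdB hf1 (isdZ _ (isd_fi hS hD))) (isdZ _ (isdZ _ (isd_fi hD hD)))).
Qed.

Lemma merit_dif : differentiable (merit mu f) X.
Proof.
rewrite merit_eq.
have hT : mxdif X (fun Y : 'M[R]_(n,p) => Y^T) := mxdif_tr (@mxdif_id R n p X).
have hI : mxdif X (fun Y : 'M[R]_(n,p) => Y) := @mxdif_id R n p X.
have hM := mxdif_mul hT mxdif_G.
have hS : mxdif X (fun Y => msym (Y^T *m egrad f Y)).
  exact: (mxdif_scale 2^-1 (mxdif_add hM (mxdif_tr hM))).
have hD : mxdif X (fun Y : 'M[R]_(n,p) => Y^T *m Y - 1%:M).
  exact: (mxdif_sub (mxdif_mul hT hI) (mxdif_cst _ 1%:M)).
exact: (difD (difB (hf.1 X) (difM (difC _ _) (dif_fi hS hD))) (difM (difC _ _) (difM (difC _ _) (dif_fi hD hD)))).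
Qed.

End MD.

Lemma DG_bound (R : realType) n p (f : 'M[R]_(n,p) -> R) (eps L : R) (X V : 'M[R]_(n,p)) :
  C2 f ->
  (forall X Y, X \in (@St_eps R n p eps) -> Y \in (@St_eps R n p eps) ->
     frob_norm (egrad f X - egrad f Y) <= L * frob_norm (X - Y)) ->
  X \in St_eps eps ->
  (exists2 d, 0 < d & forall t, 0 < t < d -> X - t *: V \in St_eps eps) ->
  0 <= L ->
  frob_norm (\matrix_(i,j) 'D_V (fun Y => egrad f Y i j) X) <= L * frob_norm V.
Proof.
move=> hf hL hX [d d0 hd] L0.
set G := egrad f.
have dG : derivable G X V.
  apply/derivable_mxP => i j; apply: diff_derivable; exact: hf.2.1.
have eD := derive_mx dG.
rewrite -eD.
set phi := fun h : R => h^-1 *: ((G \o shift X) (h *: V) - G X).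
have c1 : phi @ 0^' --> 'D_V G X by exact: dG.
have c2 : phi @ 0^'- --> 'D_V G X by exact: cvg_dnbhs_at_left.
set q := fun M : 'M[R]_(n,p) => frob_inner M M.
have qc : {for 'D_V G X, continuous q}.
  apply: differentiable_continuous.
  exact: (dif_fi (@mxdif_id R n p _) (@mxdif_id R n p _)).
have c3 : (q \o phi) @ 0^'- --> q ('D_V G X) by exact: continuous_cvg.
have hle : q ('D_V G X) <= (L * frob_norm V) ^+ 2.
  rewrite -(cvg_lim _ c3) //; apply: limr_le; first by apply/cvg_ex; eexists; exact: c3.
  exists d => //= h; rewrite /ball_ /= sub0r normrN => hh hneg.
  have hin : h *: V + X \in St_eps eps.
    rewrite ltr0_norm // in hh.
    have := hd (- h); rewrite oppr_gt0 hneg hh => /(_ isT).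
    by rewrite scaleNr opprK addrC.
  have := hL _ _ hin hX.
  rewrite addrK fn_scale => hl.
  rewrite /q /phi /= fiZl fiZr -fn_sqr.
  have hn0 : h != 0 by rewrite lt_eqF.
  have := fn_ge0 (G (h *: V + X) - G X).
  set u := frob_norm _ in hl *.
  move=> u0.
  have : u ^+ 2 <= (L * (`|h| * frob_norm V)) ^+ 2.
    by rewrite lerXn2r // ?nnegrE // (le_trans u0 hl).
  rewrite !exprMn -normrX ger0_norm ?sqr_ge0 //.
  move=> hu.
  have h2 : 0 < h * h by nra.
  rewrite mulrA -invfM mulrC ler_pdivrMr //.
  by rewrite (le_trans hu) // expr2; lra.
by apply: fn_le_sqr => //; rewrite mulr_ge0 // fn_ge0.
Qed.

Section NearSt.
Variable R : realType.
Local Notation fi := (@frob_inner R _ _).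
Local Notation fn := (@frob_norm R _ _).

Lemma quad_expand n p (X L : 'M[R]_(n,p)) t :
  (X - t *: L)^T *m (X - t *: L) = X^T *m X - t *: (L^T *m X + X^T *m L) + (t * t) *: (L^T *m L).
Proof.
have -> : (X - t *: L)^T = X^T - t *: L^T.
  by apply/matrixP => i j; rewrite !mxE.
rewrite mulmxBl !mulmxBr -!scalemxAl -!scalemxAr scalerA.
set A := X^T *m X; set B := X^T *m L; set C := L^T *m X; set E := L^T *m L.
by apply/matrixP => i j; rewrite !mxE; ring.
Qed.


Lemma inStE n p (eps : R) (X : 'M[R]_(n,p)) : (X \in St_eps eps) = (fn (X^T *m X - 1%:M) <= eps).
Proof. by apply/idP/idP; rewrite inE. Qed.

Lemma fi_expand6 m k (D P Q : 'M[R]_(m,k)) a b :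
  fi (D - a *: P + b *: Q) (D - a *: P + b *: Q) =
  fi D D - 2 * a * fi D P + 2 * b * fi D Q + a * a * fi P P - 2 * a * b * fi P Q + b * b * fi Q Q.
Proof.
rewrite !(fiDl, fiDr, fiNl, fiNr, fiZl, fiZr) (fiC P D) (fiC Q D) (fiC Q P); ring.
Qed.

Lemma near_St n p (X : 'M[R]_(n,p)) (Psi : 'M[R]_n) (eps lam : R) :
  0 < eps -> eps < 1 -> 0 < lam -> Psi^T = - Psi -> X \in St_eps eps ->
  exists2 d, 0 < d & forall t, 0 < t < d ->
    X - t *: (Psi *m X + lam *: (X *m (X^T *m X - 1%:M))) \in St_eps eps.
Proof.
move=> e0 e1 l0 hP; rewrite inStE => hX.
set D := X^T *m X - 1%:M.
set Lam := Psi *m X + lam *: (X *m D).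
have hXX : X^T *m X = 1%:M + D by rewrite /D addrC subrK.
have hDs : D^T = D by rewrite /D linearB /= trmx_mul trmxK trmx1.
have hLX := LtX_gen lam hXX hDs hP.
set P := D + D *m D.
set Q := Lam^T *m Lam.
have expand : forall t, (X - t *: Lam)^T *m (X - t *: Lam) - 1%:M = D - (t * (2 * lam)) *: P + (t * t) *: Q.
  move=> t; rewrite quad_expand -/Lam hLX hXX scalerA.
  set A := D; set B := P; set C := Q.
  by apply/matrixP => i j; rewrite !mxE; ring.
set a := fi D D.
have a0 : 0 <= a := fi_ge0 D.
have ha : a <= eps ^+ 2 by rewrite /a -fn_sqr lerXn2r // ?nnegrE ?fn_ge0 // ltW.
have hb : (1 - eps) * a <= fi D P.
  rewrite /P fiDr.
  have := fi_CSabs D (D *m D); rewrite ler_norml => /andP[h1 _].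
  have h2 : fn (D *m D) <= fn D * fn D := fn_mul D D.
  have h3 : fn D * fn (D *m D) <= eps * a.
    rewrite /a -fn_sqr expr2; have := fn_ge0 D; have := fn_ge0 (D *m D); nra.
  rewrite -/a; lra.
set pn := fn P; set qn := fn Q.
have pn0 : 0 <= pn := fn_ge0 P.
have qn0 : 0 <= qn := fn_ge0 Q.
have hc : fi D Q <= eps * qn.
  apply: le_trans (fi_CS D Q) _; rewrite ler_wpM2r //.
have hg : - (pn * qn) <= fi P Q.
  by have := fi_CSabs P Q; rewrite ler_norml => /andP[].
have he : fi P P = pn ^+ 2 by rewrite fn_sqr.
have hk : fi Q Q = qn ^+ 2 by rewrite fn_sqr.
set K := 2 * eps * qn + 4 * lam ^+ 2 * pn ^+ 2 + 4 * lam * pn * qn + qn ^+ 2.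
have K0 : 0 <= K.
  rewrite /K; have := mulr_ge0 pn0 qn0; have := sqr_ge0 pn; have := sqr_ge0 qn; have := sqr_ge0 lam; nra.
set kap := 4 * lam * (1 - eps).
have kap0 : 0 < kap by rewrite /kap; nra.
set m := Num.min 1 kap.
have m1 : m <= 1 by rewrite /m ge_min lexx.
have mk : m <= kap by rewrite /m ge_min lexx orbT.
have m0 : 0 < m by rewrite /m lt_min ltr01 kap0.
set d := Num.min 1 (eps ^+ 2 * m / (2 * (K + 1))).
have K1 : 0 < 2 * (K + 1) by lra.
exists d.
  by rewrite /d lt_min ltr01 /= divr_gt0 // mulr_gt0 // exprn_gt0.
move=> t /andP[t0 td].
have t1 : t < 1 by move: td; rewrite /d lt_min => /andP[].
have t2 : t * (2 * (K + 1)) < eps ^+ 2 * m.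
  by move: td; rewrite /d lt_min => /andP[_]; rewrite ltr_pdivlMr.
rewrite inStE expand; apply: fn_le_sqr; first lra.
rewrite fi_expand6 -/a he hk.
have s1 : fi D D - 2 * (t * (2 * lam)) * fi D P + 2 * (t * t) * fi D Q +
    t * (2 * lam) * (t * (2 * lam)) * pn ^+ 2 - 2 * (t * (2 * lam)) * (t * t) * fi P Q +
    t * t * (t * t) * qn ^+ 2 <= a - kap * t * a + t * t * K.
  rewrite -/a /kap /K.
  have tl : 0 < t * lam by nra.
  have q1 : - (4 * (t * lam)) * fi D P <= - (4 * (t * lam)) * ((1 - eps) * a).
    by rewrite !mulNr lerN2 ler_wpM2l //; nra.
  have q2 : 2 * (t * t) * fi D Q <= 2 * (t * t) * (eps * qn).
    by apply: ler_wpM2l => //; nra.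
  have c0 : 0 <= 4 * (t * lam) * (t * t) by nra.
  have q3 : - (4 * (t * lam) * (t * t)) * fi P Q <= 4 * (t * lam) * (t * t) * (pn * qn).
    have := ler_wpM2l c0 hg; lra.
  have q4 : 4 * (t * lam) * (t * t) * (pn * qn) <= 4 * (t * lam) * t * (pn * qn).
    have : 0 <= 4 * (t * lam) * t * (pn * qn) * (1 - t).
      by rewrite !mulr_ge0 //; lra.
    lra.
  have q5 : t * t * (t * t) * qn ^+ 2 <= t * t * qn ^+ 2.
    have : 0 <= t * t * qn ^+ 2 * (1 - t * t).
      by rewrite !mulr_ge0 ?sqr_ge0 //; nra.
    lra.
  nra.
apply: le_trans s1 _.
have tK : t * K <= t * (K + 1) by nra.
have e2 : 0 <= eps ^+ 2 by exact: sqr_ge0.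
have em1 : eps ^+ 2 * m <= eps ^+ 2 by rewrite ler_piMr.
have emk : eps ^+ 2 * m <= eps ^+ 2 * kap by rewrite ler_wpM2l.
have tK2 : t * K <= eps ^+ 2 * kap / 2 by lra.
have ttK : t * t * K <= t * K.
  have : 0 <= t * K * (1 - t) by rewrite !mulr_ge0 //; lra.
  lra.
have [aS|aL] := lerP a (eps ^+ 2 / 2).
  have : 0 <= kap * t * a by rewrite !mulr_ge0 //; lra.
  lra.
have h1 : t * (t * K) <= t * (eps ^+ 2 * kap / 2) by rewrite ler_wpM2l //; lra.
have h2 : kap * t * (eps ^+ 2 / 2) <= kap * t * a.
  by rewrite ler_wpM2l //; [rewrite mulr_ge0 //; lra | lra].
lra.
Qed.

End NearSt.

Lemma final_ineq (R : realType) (a b e d g s L hL lam mu eps t1 t2 t3 : R) :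
  0 <= a -> 0 <= b -> 0 <= e -> 0 <= d -> 0 <= g -> 0 < eps -> eps < 3/4 -> 0 < lam ->
  0 < L -> L <= hL -> g <= hL -> 0 <= s ->
  b <= (1 + eps) * a -> b ^+ 2 <= (1 + eps) * a ^+ 2 -> (1 - eps) * d ^+ 2 <= e ^+ 2 ->
  `|t1| <= a * g * e -> `|t2| <= s * d ^+ 2 -> `|t3| <= L * (b + lam * e) * e ->
  mu >= 2 / (3 - 4 * eps) *
        (L * (1 - eps) + 3 * s + hL ^+ 2 * ((1 + eps) ^+ 2 / (lam * (1 - eps)))) ->
  2^-1 * b ^+ 2 + lam * mu * (4^-1 * d ^+ 2) <=
  a ^+ 2 - 2^-1 * t1 - 3/2 * lam * t2 - 2^-1 * t3 + mu * lam * e ^+ 2.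
Proof.
move=> a0 b0 e0 d0 g0 ep0 ep34 l0 L0 LhL ghL s0 hb hb2 hde ht1 ht2 ht3 hmu.
have u0 : 0 < 1 - eps by lra.
have hL0 : 0 < hL by lra.
set k := hL ^+ 2 * ((1 + eps) ^+ 2 / (lam * (1 - eps))).
have lu0 : 0 < lam * (1 - eps) by rewrite mulr_gt0.
have hk : k * (lam * (1 - eps)) = hL ^+ 2 * (1 + eps) ^+ 2.
  by rewrite /k -mulrA divfK // gt_eqF.
have k0 : 0 <= k by rewrite /k mulr_ge0 ?sqr_ge0 // divr_ge0 ?sqr_ge0 // ltW.
set Z := L * (1 - eps) + 3 * s + k in hmu.
have c0 : 0 < 3 - 4 * eps by lra.
have h2Z : 2 * Z <= (3 - 4 * eps) * mu.
  have := ler_wpM2l (ltW c0) hmu.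
  by rewrite mulrA mulrCA divff ?gt_eqF // mulr1.
have Z0 : 0 <= Z by rewrite /Z; have := mulr_ge0 (ltW L0) (ltW u0); lra.
have mu0 : 0 <= mu.
  have : 0 <= (3 - 4 * eps) * mu by lra.
  by rewrite pmulr_rge0.
set W := mu * (3/4 - eps) - L * (1 - eps) / 2 - 3 * s / 2.
have kW : k <= 2 * W by rewrite /W /Z in h2Z *; lra.
have hW : hL ^+ 2 * (1 + eps) ^+ 2 <= 2 * (lam * (1 - eps)) * W.
  rewrite -hk; have := ler_wpM2r (ltW lu0) kW; lra.
have f1 : t1 <= a * g * e by move: ht1; rewrite ler_norml => /andP[].
have f2 : t2 <= s * d ^+ 2 by move: ht2; rewrite ler_norml => /andP[].
have f2' : lam * t2 <= lam * (s * d ^+ 2).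
  by rewrite ler_wpM2l // ltW.
have f3 : t3 <= L * (b + lam * e) * e by move: ht3; rewrite ler_norml => /andP[].
have f4 : a * g * e <= a * hL * e.
  by rewrite -!mulrA ler_wpM2l // ler_wpM2r.
have f5 : L * b * e <= hL * ((1 + eps) * a) * e.
  rewrite ler_wpM2r //; apply: ler_pM => //; exact: ltW.
set B0 := hL * (2 + eps) / 2.
set P1 := (1 - eps) / 2 * a ^+ 2 - B0 * a * e + lam * (mu - L / 2) * e ^+ 2
          - (3 * s / 2 + mu / 4) * lam * d ^+ 2.
have step1 : P1 <= a ^+ 2 - 2^-1 * t1 - 3/2 * lam * t2 - 2^-1 * t3 + mu * lam * e ^+ 2
                   - (2^-1 * b ^+ 2 + lam * mu * (4^-1 * d ^+ 2)).
  rewrite /P1 /B0.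
  have g1 : - (2^-1 * t1) >= - (2^-1 * (a * hL * e)) by lra.
  have g2 : - (3/2 * lam * t2) >= - (3/2 * (lam * (s * d ^+ 2))).
    lra.
  have g3 : - (2^-1 * t3) >= - (2^-1 * (hL * ((1 + eps) * a) * e + L * lam * e ^+ 2)).
    have : L * (b + lam * e) * e = L * b * e + L * lam * e ^+ 2 by ring.
    lra.
  have g4 : - (2^-1 * b ^+ 2) >= - (2^-1 * ((1 + eps) * a ^+ 2)) by lra.
  have : a ^+ 2 - 2^-1 * (a * hL * e) - 3/2 * (lam * (s * d ^+ 2)) - 2^-1 * (hL * ((1 + eps) * a) * e + L * lam * e ^+ 2) + mu * lam * e ^+ 2 - (2^-1 * ((1 + eps) * a ^+ 2) + lam * mu * (4^-1 * d ^+ 2)) = (1 - eps) / 2 * a ^+ 2 - hL * (2 + eps) / 2 * a * e + lam * (mu - L / 2) * e ^+ 2 - (3 * s / 2 + mu / 4) * lam * d ^+ 2 by field.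
  lra.
have cf : 0 <= (3 * s / 2 + mu / 4) * lam by apply: mulr_ge0; [lra | exact: ltW].
have f7 : (3 * s / 2 + mu / 4) * lam * ((1 - eps) * d ^+ 2) <= (3 * s / 2 + mu / 4) * lam * e ^+ 2.
  by rewrite ler_wpM2l.
set A := (1 - eps) ^+ 2 / 2.
set B := (1 - eps) * B0.
set C := lam * W.
set Q := A * a ^+ 2 - B * a * e + C * e ^+ 2.
have step2 : Q <= (1 - eps) * P1.
  rewrite /Q /P1 /A /B /C /W; lra.
have A0 : 0 < A by rewrite /A divr_gt0 // exprn_gt0.
have disc : B ^+ 2 <= 4 * A * C.
  have e1 : 4 * A * C = (1 - eps) * (2 * (lam * (1 - eps)) * W).
    by rewrite /A /C; field.
  rewrite e1.
  have h1 : (1 - eps) * (hL ^+ 2 * (1 + eps) ^+ 2) <= (1 - eps) * (2 * (lam * (1 - eps)) * W).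
    by rewrite ler_wpM2l // ltW.
  apply: le_trans h1.
  rewrite /B /B0.
  have hh : 0 <= hL ^+ 2 := sqr_ge0 hL.
  have q : (1 - eps) * (2 + eps) ^+ 2 / 4 <= (1 + eps) ^+ 2.
    have eq : (1 + eps) ^+ 2 - (1 - eps) * (2 + eps) ^+ 2 / 4 = (8 * eps + 7 * eps ^+ 2 + eps ^+ 3) / 4 by field.
    have : 0 <= (8 * eps + 7 * eps ^+ 2 + eps ^+ 3) / 4.
      by rewrite divr_ge0 // !addr_ge0 ?mulr_ge0 ?exprn_ge0 // ltW.
    lra.
  have := ler_wpM2l hh q.
  have := ler_wpM2l (ltW u0) (ler_wpM2l hh q).
  move=> H _; apply: le_trans H.
  by rewrite le_eqVlt; apply/orP; left; apply/eqP; field.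
have Q0 : 0 <= Q.
  have eQ : 4 * A * Q = (2 * A * a - B * e) ^+ 2 + (4 * A * C - B ^+ 2) * e ^+ 2.
    by rewrite /Q; ring.
  have : 0 <= 4 * A * Q.
    have hd : 0 <= 4 * A * C - B ^+ 2 by rewrite subr_ge0.
    rewrite eQ; apply: addr_ge0; [exact: sqr_ge0 | exact: mulr_ge0 hd (sqr_ge0 _)].
  by rewrite pmulr_rge0 // mulr_gt0.
have P10 : 0 <= P1.
  have : 0 <= (1 - eps) * P1 by lra.
  by rewrite pmulr_rge0.
lra.
Qed.

Lemma sup_ge (R : realType) (E : set R) x B : E x -> (forall y, E y -> y <= B) -> x <= sup E.
Proof.
move=> Ex hB; apply: sup_upper_bound => //; split; first by exists x.
by exists B => y /hB.
Qed.

Lemma fn_msym (R : realType) k (A : 'M[R]_k) : frob_norm (msym A) <= frob_norm A.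
Proof.
rewrite /msym fn_scale; apply: le_trans (_ : `|2^-1| * (frob_norm A + frob_norm A^T) <= _).
  by rewrite ler_wpM2l // fn_triangle.
rewrite fn_tr ger0_norm; lra.
Qed.

Unset Implicit Arguments.
Set Strict Implicit.

Theorem proposition6 (R : realType) (n p : nat) (lam eps L mu : R)
  (f : 'M[R]_(n, p) -> R) :
  (1 <= p)%N -> (p <= n)%N ->
  0 < lam -> 0 < eps -> eps < 3 / 4 ->
  C2 f ->
  0 < L ->
  (forall X Y, X \in (@St_eps R n p eps) -> Y \in (@St_eps R n p eps) ->
     frob_norm (egrad f X - egrad f Y) <= L * frob_norm (X - Y)) ->
  let L' := sup [set frob_norm (egrad f X) | X in (@St_eps R n p eps)] in
  let hatL := Num.max L L' in
  let s := sup [set frob_norm (msym (X^T *m egrad f X)) | X in (@St_eps R n p eps)] in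
  mu >= 2 / (3 - 4 * eps) *
        (L * (1 - eps) + 3 * s + hatL ^+ 2 * ((1 + eps) ^+ 2 / (lam * (1 - eps)))) ->
  let nu := lam * mu in
  forall X, X \in (@St_eps R n p eps) ->
    frob_inner (egrad (merit mu f) X) (landing lam f X)
      >= 2^-1 * frob_norm (rgrad f X) ^+ 2 + nu * Ncons X.
Proof.
move=> p1 pn l0 e0 e34 hf L0 hL L' hatL s hmu nu X hX.
have e1 : eps < 1 by lra.
have hXn : frob_norm (X^T *m X - 1%:M) <= eps by rewrite -inStE.
set c0 := frob_inner (1%:M : 'M[R]_p) 1%:M + frob_norm (1%:M : 'M[R]_p) * eps.
have Ybd : forall Y : 'M[R]_(n,p), Y \in St_eps eps -> frob_norm Y <= c0 + 1.
  move=> Y; rewrite inStE => hY.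
  have c00 : 0 <= c0 by rewrite /c0 addr_ge0 ?fi_ge0 // mulr_ge0 ?fn_ge0 // ltW.
  apply: fn_le_sqr; first lra.
  have -> : frob_inner Y Y = frob_inner (1%:M : 'M[R]_p) (Y^T *m Y).
    by rewrite !fiE trmx1 mul1mx mxtrace_mulC.
  rewrite (XtX Y) fiDr.
  have := fi_CS (1%:M : 'M[R]_p) (Y^T *m Y - 1%:M).
  have := fn_ge0 (1%:M : 'M[R]_p).
  move=> h0 h1; have : frob_norm (1%:M : 'M[R]_p) * frob_norm (Y^T *m Y - 1%:M) <= frob_norm (1%:M : 'M[R]_p) * eps.
    by rewrite ler_wpM2l.
  have : c0 <= (c0 + 1) ^+ 2 by nra.
  rewrite /c0 => h2 h3; lra.
set B1 := frob_norm (egrad f X) + L * (2 * (c0 + 1)).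
have Gbd : forall Y : 'M[R]_(n,p), Y \in St_eps eps -> frob_norm (egrad f Y) <= B1.
  move=> Y hY.
  have := hL _ _ hY hX; have := fn_sub_le Y X; have := Ybd _ hY; have := Ybd _ hX.
  have := fn_triangle (egrad f X) (egrad f Y - egrad f X).
  rewrite addrC subrK /B1.
  move=> h1 h2 h3 h4 h5; nra.
have gL' : frob_norm (egrad f X) <= L'.
  apply: (sup_ge (B := B1)); first by exists X.
  by move=> y [Y hY <-]; apply: Gbd; rewrite inE.
have sS : frob_norm (msym (X^T *m egrad f X)) <= s.
  apply: (sup_ge (B := (c0 + 1) * B1)); first by exists X.
  move=> y [Y hY0 <-]; have hY : Y \in St_eps eps by rewrite inE.
  apply: le_trans (fn_msym _) _; apply: le_trans (fn_mul _ _) _.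
  rewrite fn_tr; apply: ler_pM; rewrite ?fn_ge0 //; [exact: Ybd | exact: Gbd].
have s0 : 0 <= s := le_trans (fn_ge0 _) sS.
have LhL : L <= hatL by rewrite /hatL le_max lexx.
have L'hL : L' <= hatL by rewrite /hatL le_max lexx orbT.
set G := egrad f X.
set D := X^T *m X - 1%:M.
set psi := mskew (G *m X^T).
set Lam := landing lam f X.
have eLam : Lam = psi *m X + lam *: (X *m D) by [].
set DG := \matrix_(i,j) 'D_Lam (fun Y => egrad f Y i j) X.
rewrite egrad_inner; last exact: merit_dif.
have hd := @merit_isd R n p mu f X Lam hf.
rewrite (@derive_val _ _ _ _ _ _ _ hd) -/G -/D -/DG.
have hP : psi^T = - psi := mskew_tr _.
have hXX : X^T *m X = 1%:M + D := XtX X.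
have hDs : D^T = D := D_sym X.
have hDDs : (D *m D)^T = D *m D by rewrite trmx_mul hDs.
have hLX : Lam^T *m X + X^T *m Lam = (2 * lam) *: (D + D *m D).
  by rewrite eLam; exact: LtX_gen.
set S := msym (X^T *m G).
set t1 := frob_inner G (psi *m X *m D).
set t2 := frob_inner S (D *m D).
set t3 := frob_inner DG (X *m D).
have E1 : frob_inner G Lam = frob_inner psi psi + lam * frob_inner S D.
  rewrite eLam fiDr fiZr fi_skew_mul /S (fi_msym _ hDs).
  by rewrite (fiC G) fi_mull (fiC D).
have E2 : frob_inner (msym (Lam^T *m G + X^T *m DG)) D = t1 + lam * t2 + t3.
  rewrite (fi_msym _ hDs) fiDl !fi_mull !trmxK eLam mulmxDl -scalemxAl fiDr fiZr.
  rewrite /t2 /S (fi_msym _ hDDs) -(mulmxA X D D) (fiC G (X *m _)) fi_mull (fiC (D *m D)).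
  by [].
have E3 : frob_inner S (Lam^T *m X + X^T *m Lam - 0) = 2 * lam * (frob_inner S D + t2).
  by rewrite subr0 hLX fiZr fiDr.
set e := frob_norm (X *m D).
have E4 : frob_inner (Lam^T *m X + X^T *m Lam - 0) D = 2 * lam * e ^+ 2.
  by rewrite subr0 hLX fiZl fn_sqr fi_XA fiDl (fiC (D *m D)).
have E4' : frob_inner D (Lam^T *m X + X^T *m Lam - 0) = 2 * lam * e ^+ 2.
  by rewrite fiC E4.
rewrite E1 E2 E3 E4 E4'.
set a := frob_norm psi; set b := frob_norm (psi *m X); set d := frob_norm D.
set g := frob_norm G.
have hr : frob_norm (rgrad f X) = b by [].
have hN : Ncons X = 4^-1 * d ^+ 2 by [].
rewrite ?hr ?hN.
rewrite -(fn_sqr psi) -/a.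
have a0 : 0 <= a := fn_ge0 _.
have b0 : 0 <= b := fn_ge0 _.
have d0 : 0 <= d := fn_ge0 _.
have g0 : 0 <= g := fn_ge0 _.
have ee0 : 0 <= e := fn_ge0 _.
have gh : g <= hatL := le_trans gL' L'hL.
have hb2 : b ^+ 2 <= (1 + eps) * a ^+ 2.
  by rewrite /b /a !fn_sqr; exact: (BX_le hXn).
have hb : b <= (1 + eps) * a.
  have : b ^+ 2 <= ((1 + eps) * a) ^+ 2.
    apply: le_trans hb2 _; rewrite exprMn ler_wpM2r ?sqr_ge0 //.
    rewrite expr2; nra.
  have c1 : 0 <= (1 + eps) * a by apply: mulr_ge0 => //; lra.
  move=> h; nra.
have hde : (1 - eps) * d ^+ 2 <= e ^+ 2.
  by rewrite /e /d !fn_sqr; exact: (XA_ge hXn).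
have ht1 : `|t1| <= a * g * e.
  rewrite /t1 -mulmxA fiC fi_mull.
  apply: le_trans (fi_CSabs _ _) _; rewrite -/e mulrC ler_wpM2r //.
  by apply: le_trans (fn_mul _ _) _; rewrite fn_tr.
have ht2 : `|t2| <= s * d ^+ 2.
  rewrite /t2; apply: le_trans (fi_CSabs _ _) _.
  apply: ler_pM; rewrite ?fn_ge0 //.
  by apply: le_trans (fn_mul _ _) _; rewrite expr2.
have hnear : exists2 dd, 0 < dd & forall t, 0 < t < dd -> X - t *: Lam \in St_eps eps.
  by rewrite eLam; exact: near_St.
have hDG := DG_bound hf hL hX hnear (ltW L0).
have hLam : frob_norm Lam <= b + lam * e.
  rewrite eLam; apply: le_trans (fn_triangle _ _) _.
  by rewrite fn_scale ger0_norm ?(ltW l0).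
have ht3 : `|t3| <= L * (b + lam * e) * e.
  rewrite /t3; apply: le_trans (fi_CSabs _ _) _; rewrite ler_wpM2r //.
  apply: le_trans hDG _; rewrite ler_wpM2l //; exact: ltW.
have FI := final_ineq a0 b0 ee0 d0 g0 e0 e34 l0 L0 LhL gh s0 hb hb2 hde ht1 ht2 ht3 hmu.
rewrite /nu; lra.
Qed.
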